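(* For every integer $n>2$ there exists a unique $\zeta_n>1$ such that the system $$P_n'(1-\varepsilon_{j+1})-P_n'(1-\varepsilon_j)=\varepsilon_{j+1}P_n'(1-\varepsilon_{j+1})+P_n(1-\varepsilon_{j+1})-\frac{j}{\zeta_n},\qquad j=1,\dots,n-1,$$ with initial condition $\varepsilon_1=1$ has a solution $(\varepsilon_j)_{j=1}^n$ satisfying $0\le\varepsilon_n<\dots<\varepsilon_2<\varepsilon_1=1$ and $$\zeta_n=\frac{n}{\varepsilon_nP_n'(1-\varepsilon_n)+P_n(1-\varepsilon_n)}.$$
   Context: $P_n(t)=\sum_{i=1}^nt^i$ and $P_n'(t)=\sum_{i=1}^n i\,t^{i-1}$. *)

(* Defs.v *)
From mathcomp Require Import all_boot all_order all_algebra.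
From mathcomp Require Import reals.
Set Implicit Arguments. Unset Strict Implicit. Unset Printing Implicit Defensive.
Import Order.TTheory GRing.Theory Num.Theory.
Local Open Scope ring_scope.

Definition Pn {R : realType} (n : nat) (t : R) : R :=
  \sum_(1 <= i < n.+1) t ^+ i.

Definition dPn {R : realType} (n : nat) (t : R) : R :=
  \sum_(1 <= i < n.+1) i%:R * t ^+ (i.-1).

(* Main.v *)
Require Import Defs.
From mathcomp Require Import all_boot all_order all_algebra.
From mathcomp Require Import reals.
From mathcomp Require Import classical_sets boolp topology normedtype realfun derive.
From mathcomp Require Import ring lra.
Import Order.TTheory GRing.Theory Num.Theory numFieldNormedType.Exports.
Local Open Scope ring_scope.



Section Alg.
Variable R : realType.
Variable n : nat.
Implicit Types x y t : R.

Definition GG t : R := t * dPn n t - Pn n t.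
Definition HH t : R := dPn n t - GG t.

Lemma Pn_poly : exists p : {poly R}, forall t, Pn n t = p.[t].
Proof.
exists (\sum_(1 <= i < n.+1) 'X^i) => t.
by rewrite /Pn horner_sum; apply: eq_bigr => i _; rewrite hornerXn.
Qed.

Lemma dPn_poly : exists p : {poly R}, forall t, dPn n t = p.[t].
Proof.
exists (\sum_(1 <= i < n.+1) ((i%:R : R)%:P * 'X^(i.-1)) : {poly R}) => t.
by rewrite /dPn horner_sum; apply: eq_bigr => i _; rewrite hornerE hornerXn.
Qed.

Lemma GG_sum t : GG t = \sum_(1 <= i < n.+1) (i%:R - 1) * t ^+ i.
Proof.
rewrite /GG /dPn /Pn mulr_sumr -sumrB; apply: eq_big_nat => i /andP[i1 _].
case: i i1 => // i _ /=; rewrite exprS; ring.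
Qed.

Lemma HH_sum t : HH t = \sum_(1 <= i < n.+1)
   ((i.-1).+1%:R * t ^+ i.-1 - (i.-1)%:R * t ^+ (i.-1).+1).
Proof.
rewrite /HH GG_sum /dPn -sumrB; apply: eq_big_nat => i /andP[i1 _].
case: i i1 => // i _ /=; rewrite -natr1; ring.
Qed.

Lemma bern m x y : 0 <= x -> x <= y -> x <= 1 ->
  m%:R * x ^+ m * (y - x) <= y ^+ m - x ^+ m.
Proof.
move=> x0 xy x1; elim: m => [|m IH]; first by rewrite mul0r mul0r expr0 subrr.
rewrite !exprS -natr1.
have p0 : 0 <= x ^+ m by rewrite exprn_ge0.
set p := x ^+ m in p0 IH *; set a := y ^+ m in IH *.
have h1 : 0 <= (y - x) * (m%:R * p * (y - x)).
  by apply: mulr_ge0; [lra| apply: mulr_ge0; [apply: mulr_ge0|lra]].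
have h2 : 0 <= (1 - x) * (p * (y - x)).
  by apply: mulr_ge0; [lra| apply: mulr_ge0; [|lra]].
have h3 : y * (m%:R * p * (y - x)) <= y * (a - p).
  by apply: ler_wpM2l; lra.
nra.
Qed.

Lemma phi_mono m x y : 0 <= x -> x <= y -> y <= 1 ->
  m.+1%:R * x ^+ m - m%:R * x ^+ m.+1 <= m.+1%:R * y ^+ m - m%:R * y ^+ m.+1.
Proof.
move=> x0 xy y1.
have B := @bern m x y x0 xy (le_trans xy y1).
rewrite !exprS -natr1.
have p0 : 0 <= x ^+ m by rewrite exprn_ge0.
set p := x ^+ m in p0 B *; set a := y ^+ m in B *.
have m0 : 0 <= m%:R :> R by [].
have h2 : 0 <= m%:R * p * (y - x) by apply: mulr_ge0; [apply: mulr_ge0|lra].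
have h1 : 0 <= (m%:R * (1 - y)) * (a - p).
  by apply: mulr_ge0; [apply: mulr_ge0; lra| lra].
nra.
Qed.

Lemma HH_mono x y : 0 <= x -> x <= y -> y <= 1 -> HH x <= HH y.
Proof.
move=> x0 xy y1; rewrite !HH_sum; apply: ler_sum_nat => i _.
exact: phi_mono.
Qed.

Lemma dPn_mono x y : 0 <= x -> x <= y -> dPn n x <= dPn n y.
Proof.
move=> x0 xy; apply: ler_sum_nat => i _; apply: ler_wpM2l => //.
by apply: lerXn2r => //; rewrite nnegrE ?(le_trans x0 xy).
Qed.

Lemma sum_split2 (F : nat -> R) : (2 <= n)%N ->
  \sum_(1 <= i < n.+1) F i = F 1%N + F 2%N + \sum_(3 <= i < n.+1) F i.
Proof. move=> n2; rewrite big_ltn; last by rewrite ltnS ltnW. by rewrite big_ltn ?ltnS // addrA. Qed.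

Lemma GG_strict x y : (2 <= n)%N -> 0 <= x -> x < y -> GG x < GG y.
Proof.
move=> n2 x0 xy; rewrite !GG_sum !sum_split2 //.
have le3 : \sum_(3 <= i < n.+1) ((i%:R:R) - 1) * x ^+ i <= \sum_(3 <= i < n.+1) ((i%:R:R) - 1) * y ^+ i.
  apply: ler_sum_nat => i /andP[i3 _]; apply: ler_wpM2l.
    by rewrite subr_ge0 ler1n; case: i i3.
  by apply: lerXn2r; rewrite ?nnegrE // ?(le_trans x0 (ltW xy)) ?ltW.
have : x ^+ 2 < y ^+ 2 by rewrite ltrXn2r.
have -> : ((2%N)%:R : R) - 1 = 1 by rewrite -natr1 addrK.
rewrite subrr !mul0r !mul1r; lra.
Qed.

Lemma Pn1 : Pn n (1:R) = n%:R.
Proof. rewrite /Pn (eq_bigr (fun _ => 1)) ?sumr_const_nat ?subn1 //.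
by move=> i _; rewrite expr1n. Qed.

Lemma Pn0 : Pn n (0:R) = 0.
Proof. rewrite /Pn big_nat_cond big1 // => i /andP[/andP[i1 _] _].
by rewrite expr0n; case: i i1. Qed.

Lemma dPn0 : (1 <= n)%N -> dPn n (0:R) = 1.
Proof.
move=> n1; rewrite /dPn big_ltn // expr0 mulr1 big_nat_cond big1 ?addr0 //.
by move=> i /andP[/andP[i1 _] _]; rewrite expr0n; case: i i1 => // -[] //= i _; rewrite mulr0.
Qed.

Lemma GG0 : GG (0:R) = 0.
Proof. by rewrite /GG Pn0 mul0r subr0. Qed.

Lemma HH0 : (1 <= n)%N -> HH 0 = 1.
Proof. by move=> n1; rewrite /HH GG0 subr0 dPn0. Qed.

Lemma HH1 : HH 1 = n%:R.
Proof. by rewrite /HH /GG mul1r Pn1; ring. Qed.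

End Alg.



Section Cont.
Variable R : realType.
Variable n : nat.
Hypothesis n2 : (2 <= n)%N.
Implicit Types x y t : R.

Definition cl x : R := Order.min (Order.max x 0) 1.

Lemma clE x : cl x = (if x < 0 then 0 else if 1 < x then 1 else x).
Proof.
rewrite /cl /Order.min /Order.max /=.
case: (ltP x 0) => h0; case: (ltP 1 x) => h1; repeat case: ifP => /=; move=> *; lra.
Qed.
Ltac clc := rewrite ?clE; repeat case: ifP; move=> *; lra.
Lemma cl_ge0 x : 0 <= cl x.
Proof. rewrite clE; case: (ltP x 0) => ?; case: (ltP 1 x) => ?; lra. Qed.
Lemma cl_le1 x : cl x <= 1.
Proof. rewrite clE; case: (ltP x 0) => ?; case: (ltP 1 x) => ?; lra. Qed.
Lemma cl_id x : 0 <= x -> x <= 1 -> cl x = x.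
Proof. rewrite clE; case: (ltP x 0) => ?; case: (ltP 1 x) => ?; lra. Qed.
Lemma cl_mono x y : x <= y -> cl x <= cl y.
Proof. move=> xy; rewrite !clE; case: (ltP x 0); case: (ltP y 0); case: (ltP 1 x); case: (ltP 1 y); lra. Qed.
Lemma cl_diff_mono x y : x <= y -> x - cl x <= y - cl y.
Proof. move=> xy; rewrite !clE; case: (ltP x 0); case: (ltP y 0); case: (ltP 1 x); case: (ltP 1 y); lra. Qed.
Lemma cl_continuous : continuous cl.
Proof.
move=> x.
have := @continuous_min R R (fun x : R => Order.max x 0) (fun _ => 1) x.
have := @continuous_max R R (fun x : R => x) (fun _ => 0) x.
move=> h1 h2; apply: h2; last exact: cst_continuous.
apply: h1; last exact: cst_continuous.
exact: cvg_id.
Qed.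

Local Notation G := (GG R n).

Lemma G_strict x y : 0 <= x -> x < y -> G x < G y.
Proof. by move=> x0 xy; apply: (@GG_strict R n x y n2 x0 xy). Qed.

Lemma G_le x y : 0 <= x -> x <= y -> G x <= G y.
Proof. move=> x0; rewrite le_eqVlt => /orP[/eqP->//|]; move/(@G_strict x y x0); apply: ltW. Qed.

Lemma G_continuous : continuous G.
Proof.
have [p1 h1] := Pn_poly R n; have [p2 h2] := dPn_poly R n.
have -> : G = horner ('X * p2 - p1).
  by apply/funext => t; rewrite /GG h1 h2 !hornerE.
exact: continuous_horner.
Qed.

Lemma contD (f g : R -> R) x : {for x, continuous f} -> {for x, continuous g} ->
  {for x, continuous (fun z => f z + g z)}.
Proof. exact: (@continuousD R R^o R f g x). Qed.
Lemma contB (f g : R -> R) x : {for x, continuous f} -> {for x, continuous g} ->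
  {for x, continuous (fun z => f z - g z)}.
Proof. exact: (@continuousB R R^o R f g x). Qed.
Lemma contM (f g : R -> R) x : {for x, continuous f} -> {for x, continuous g} ->
  {for x, continuous (fun z => f z * g z)}.
Proof. by move=> hf hg; apply: (@continuousM R R f g x hf hg). Qed.

Definition Ge x : R := G (cl x) + (x - cl x).

Lemma Ge_id x : 0 <= x -> x <= 1 -> Ge x = G x.
Proof. by move=> x0 x1; rewrite /Ge cl_id // subrr addr0. Qed.

Lemma Ge_continuous : continuous Ge.
Proof.
move=> x; apply: (@contD (fun z => G (cl z)) (fun z => z - cl z) x).
  apply: continuous_comp; first exact: cl_continuous.
  exact: G_continuous.
apply: (@contB (fun z => z) cl x); first exact: cvg_id.
exact: cl_continuous.
Qed.

Lemma Ge_strict x y : x < y -> Ge x < Ge y.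
Proof.
move=> xy; rewrite /Ge.
have := @cl_mono x y (ltW xy); rewrite le_eqVlt => /orP[/eqP e|lt].
  rewrite e; apply: ler_ltD => //; move: xy e; rewrite !clE.
  by case: (ltP x 0) => ?; case: (ltP 1 x) => ?; case: (ltP y 0) => ?; case: (ltP 1 y) => ?; lra.
apply: ltr_leD; first by apply: G_strict => //; apply: cl_ge0.
exact: (@cl_diff_mono x y (ltW xy)).
Qed.

Lemma Ge_le x y : x <= y -> Ge x <= Ge y.
Proof. rewrite le_eqVlt => /orP[/eqP->//|]; move/(@Ge_strict x y); apply: ltW. Qed.

Lemma G0 : G 0 = 0. Proof. exact: GG0. Qed.

Lemma G1_ge0 : 0 <= G 1.
Proof. by rewrite -G0; apply: G_le. Qed.

Lemma Ge_surj y : exists x, Ge x = y.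
Proof.
set a := - `|y| - 1; set b := `|y| + 2.
have ab : a <= b by rewrite /a /b; have := normr_ge0 y; lra.
have ny := normr_ge0 y.
have Ga : Ge a = a.
  rewrite /Ge clE; case: (ltP a 0) => ha; first by rewrite G0; lra.
  by move: ha; rewrite /a; lra.
have Gb : Ge b = G 1 + (b - 1).
  rewrite /Ge clE; case: (ltP b 0) => hb; first by move: hb; rewrite /b; lra.
  case: (ltP 1 b) => hb'; first lra.
  by move: hb'; rewrite /b; lra.
have [c _ hc] : exists2 c, c \in `[a, b] & Ge c = y.
  apply: IVT => //; first by apply: continuous_subspaceT; apply: Ge_continuous.
  have ya : a <= y by rewrite /a; have := ler_norm (- y); rewrite normrN; lra.
  have yb : y <= b - 1 by rewrite /b; have := ler_norm y; lra.
  rewrite Ga Gb; have := G1_ge0.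
  move=> g; apply/andP; split.
    by rewrite ge_min ya.
  by rewrite le_max; apply/orP; right; lra.
by exists c.
Qed.

Lemma Ge_surjb y : exists x, Ge x == y.
Proof. by have [x hx] := Ge_surj y; exists x; apply/eqP. Qed.

Definition Ginv_e y : R := xchoose (Ge_surjb y).

Lemma Ginv_eK y : Ge (Ginv_e y) = y.
Proof. exact/eqP/(xchooseP (Ge_surjb y)). Qed.

Lemma Ge_inj : injective Ge.
Proof.
move=> x y e; case: (ltgtP x y) => // h.
  by have := @Ge_strict _ _ h; rewrite e ltxx.
by have := @Ge_strict _ _ h; rewrite e ltxx.
Qed.

Lemma GeK x : Ginv_e (Ge x) = x.
Proof. by apply: Ge_inj; rewrite Ginv_eK. Qed.

Lemma Ginv_e_continuous : continuous Ginv_e.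
Proof.
move=> y; rewrite -(Ginv_eK y).
have h := @near_can_continuous R Ge Ginv_e (Ginv_e y).
have := h (filterE _ GeK) (filterE _ Ge_continuous).
move=> hh; have hh2 := nbhs_singleton (hh (nbhs_filter _) (nbhs_filter _)). exact: hh2.
Qed.

Definition Ginv y : R := cl (Ginv_e y).

Lemma Ginv_continuous : continuous Ginv.
Proof.
move=> y; apply: (@continuous_comp _ _ _ Ginv_e cl y); first exact: Ginv_e_continuous.
exact: cl_continuous.
Qed.

Lemma Ginv_e_mono y y' : y <= y' -> Ginv_e y <= Ginv_e y'.
Proof.
move=> yy; rewrite leNgt; apply/negP => h.
have := @Ge_strict _ _ h; rewrite !Ginv_eK; lra.
Qed.

Lemma Ginv_mono y y' : y <= y' -> Ginv y <= Ginv y'.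
Proof. by move=> yy; apply: cl_mono; apply: Ginv_e_mono. Qed.

Lemma Ginv_ge0 y : 0 <= Ginv y. Proof. exact: cl_ge0. Qed.
Lemma Ginv_le1 y : Ginv y <= 1. Proof. exact: cl_le1. Qed.

Lemma GinvK x : 0 <= x -> x <= 1 -> Ginv (G x) = x.
Proof. by move=> x0 x1; rewrite /Ginv -Ge_id // GeK cl_id. Qed.

Lemma Ge0 : Ge 0 = 0. Proof. by rewrite Ge_id ?G0 ?ler01. Qed.
Lemma Ge1 : Ge 1 = G 1. Proof. by rewrite Ge_id ?ler01. Qed.

Lemma Ginv_top y : G 1 <= y -> Ginv y = 1.
Proof.
move=> hy; have h : 1 <= Ginv_e y.
  by rewrite -(GeK 1) Ge1; apply: Ginv_e_mono.
by rewrite /Ginv clE; case: (ltP (Ginv_e y) 0) => ?; [lra|]; case: (ltP 1 (Ginv_e y)) => ?; lra.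
Qed.

Lemma Ginv_bot y : y <= 0 -> Ginv y = 0.
Proof.
move=> hy; have h : Ginv_e y <= 0.
  by rewrite -(GeK 0) Ge0; apply: Ginv_e_mono.
by rewrite /Ginv clE; case: (ltP (Ginv_e y) 0) => ?; [lra|]; case: (ltP 1 (Ginv_e y)) => ?; lra.
Qed.

Lemma GGinv y : 0 <= y -> y <= G 1 -> G (Ginv y) = y.
Proof.
move=> y0 y1.
have h0 : 0 <= Ginv_e y by rewrite -(GeK 0) Ge0; apply: Ginv_e_mono.
have h1 : Ginv_e y <= 1 by rewrite -(GeK 1) Ge1; apply: Ginv_e_mono.
by rewrite /Ginv cl_id // -Ge_id // Ginv_eK.
Qed.

Lemma Ginv_lt1 y : Ginv y < 1 -> y < G 1.
Proof. move=> h; rewrite ltNge; apply/negP => /Ginv_top; lra. Qed.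

End Cont.



Section Main.
Variable R : realType.
Variable n : nat.
Hypothesis n2 : (2 <= n)%N.
Implicit Types x y c : R.

Local Notation G := (GG R n).
Local Notation H := (HH R n).
Local Notation D := (@dPn R n).
Local Notation P := (@Pn R n).
Local Notation Gi := (@Ginv R n n2).

Fixpoint ys c (k : nat) : R :=
  if k is k'.+1 then Gi (D (ys c k') - k'.+1%:R * c) else 0.

Lemma ys_ge0 c k : 0 <= ys c k.
Proof. by case: k => [|k] //=; apply: Ginv_ge0. Qed.
Lemma ys_le1 c k : ys c k <= 1.
Proof. by case: k => [|k] /=; [apply: ler01| apply: Ginv_le1]. Qed.

Lemma D_continuous : continuous D.
Proof.
have [p2 h2] := dPn_poly R n.
have -> : D = horner p2 by apply/funext => t; rewrite h2.
exact: continuous_horner.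
Qed.

Lemma H_continuous : continuous H.
Proof.
have [p1 h1] := Pn_poly R n; have [p2 h2] := dPn_poly R n.
have -> : H = horner (p2 - ('X * p2 - p1)).
  by apply/funext => t; rewrite /HH /GG h1 h2 !hornerE.
exact: continuous_horner.
Qed.

Lemma ys_continuous k : continuous (fun c => ys c k).
Proof.
elim: k => [|k IH] /=; first exact: cst_continuous.
move=> c; apply: (@continuous_comp _ _ _ (fun c => D (ys c k) - k.+1%:R * c) Gi c);
  last exact: Ginv_continuous.
apply: (@contB R (fun c => D (ys c k)) (fun c => k.+1%:R * c) c).
  apply: (@continuous_comp _ _ _ (fun c => ys c k) D c); first exact: IH.
  exact: D_continuous.
apply: (@contM R (fun _ => k.+1%:R) (fun c => c) c); first exact: cst_continuous.
exact: cvg_id.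
Qed.

Definition F c := H (ys c n.-1) - n%:R * c.

Lemma F_continuous : continuous F.
Proof.
move=> c; apply: (@contB R (fun c => H (ys c n.-1)) (fun c => n%:R * c) c).
  apply: (@continuous_comp _ _ _ (fun c => ys c n.-1) H c); first exact: ys_continuous.
  exact: H_continuous.
apply: (@contM R (fun _ => n%:R) (fun c => c) c); first exact: cst_continuous.
exact: cvg_id.
Qed.

Lemma ys_anti c c' k : c <= c' -> ys c' k <= ys c k.
Proof.
move=> cc; elim: k => [|k IH] //=; apply: Ginv_mono.
have := @dPn_mono R n _ _ (ys_ge0 c' k) IH.
have : k.+1%:R * c <= k.+1%:R * c' by apply: ler_wpM2l.
lra.
Qed.

Lemma F_strict c c' : c < c' -> F c' < F c.
Proof.
move=> cc; rewrite /F.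
have := @HH_mono R n _ _ (ys_ge0 c' n.-1) (@ys_anti c c' n.-1 (ltW cc)) (ys_le1 c n.-1).
have : n%:R * c < n%:R * c'.
  by rewrite ltr_pM2l // ltr0n; apply: leq_trans n2.
lra.
Qed.

Lemma H_ge1 x : 0 <= x -> x <= 1 -> 1 <= H x.
Proof.
move=> x0 x1; rewrite -(@HH0 R n (ltnW n2)).
by apply: HH_mono => //; rewrite lexx.
Qed.


Lemma n_gt0 : (0 < n)%N. Proof. exact: ltnW. Qed.

Lemma F0 : 0 < F 0.
Proof. rewrite /F mulr0 subr0; have := @H_ge1 _ (ys_ge0 0 n.-1) (ys_le1 0 n.-1); lra. Qed.

Lemma ys_at1 k : ys 1 k = 0.
Proof.
elim: k => [|k IH] //=; rewrite IH (@dPn0 R n n_gt0) mulr1.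
apply: Ginv_bot; rewrite subr_le0 ler1n //.
Qed.

Lemma F1 : F 1 < 0.
Proof.
rewrite /F ys_at1 (@HH0 R n n_gt0) mulr1 subr_lt0 ltr1n //.
Qed.

Lemma root_exists : exists c, [/\ 0 < c, c < 1 & F c = 0].
Proof.
have [c c01 Fc] : exists2 c, c \in `[0, 1] & F c = 0.
  apply: IVT; first exact: ler01.
    by apply: continuous_subspaceT; apply: F_continuous.
  have := F0; have := F1 => h1 h0.
  by rewrite ge_min le_max (ltW h1) (ltW h0) orbT.
move: c01; rewrite in_itv /= => /andP[c0 c1].
exists c; split => //.
  by rewrite lt_neqAle c0 andbT; apply/eqP => e; move: Fc; rewrite -e; have := F0; lra.
by rewrite lt_neqAle c1 andbT; apply/eqP => e; move: Fc; rewrite e; have := F1; lra.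
Qed.

Lemma top_step c k : c <= 1 -> (k < n)%N -> ys c k = 1 -> ys c k.+1 = 1.
Proof.
move=> c1 kn e /=; rewrite e; apply: Ginv_top.
have hH := HH1 R n; rewrite /HH in hH.
have hk : k.+1%:R * c <= k.+1%:R :> R.
  by rewrite -[X in _ <= X]mulr1; apply: ler_wpM2l.
have hkn : k.+1%:R <= n%:R :> R by rewrite ler_nat.
lra.
Qed.

Lemma top_iter c k i : c <= 1 -> (k + i < n)%N -> ys c k = 1 -> ys c (k + i) = 1.
Proof.
move=> c1; elim: i => [|i IH]; first by rewrite addn0.
move=> hki e; rewrite addnS; apply: top_step => //.
  by apply: leq_trans hki; rewrite addnS.
by apply: IH => //; apply: ltn_trans hki; rewrite addnS.
Qed.

Definition d c k := H (ys c k) - k.+1%:R * c.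

Lemma d_step c k : 0 < c -> d c k <= 0 -> d c k.+1 <= d c k - c.
Proof.
move=> c0 dk.
have hle : ys c k.+1 <= ys c k.
  rewrite /= -{2}(@GinvK R n n2 (ys c k) (ys_ge0 c k) (ys_le1 c k)).
  apply: Ginv_mono; move: dk; rewrite /d /HH; lra.
have := @HH_mono R n _ _ (ys_ge0 c k.+1) hle (ys_le1 c k).
rewrite /d -(@natr1 R k.+1) mulrDl mul1r; lra.
Qed.

Lemma d_iter c k i : 0 < c -> d c k <= 0 -> d c (k + i.+1) < 0.
Proof.
move=> c0 dk; elim: i => [|i IH].
  by rewrite addn1; have := @d_step c k c0 dk; lra.
rewrite addnS; have := @d_step c _ c0 (ltW IH); lra.
Qed.

Lemma root_props c : 0 < c -> c < 1 -> F c = 0 ->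
  forall k, (k < n.-1)%N ->
  G (ys c k.+1) = D (ys c k) - k.+1%:R * c /\ ys c k < ys c k.+1.
Proof.
move=> c0 c1 Fc k kn.
have dpos : 0 < d c k.
  rewrite ltNge; apply/negP => dk.
  have := @d_iter c k (n.-1 - k).-1 c0 dk.
  rewrite prednK ?subn_gt0 // subnKC ?(ltnW kn) //.
  by rewrite /d prednK ?n_gt0 //; move: Fc; rewrite /F; lra.
have top : forall m, (m <= n.-1)%N -> ys c m < 1.
  move=> m mn; rewrite lt_neqAle ys_le1 andbT; apply/eqP => e.
  have := @top_iter c m (n.-1 - m) (ltW c1).
  rewrite subnKC // prednK ?n_gt0 // => /(_ (leqnn _)) /(_ e) e2.
  move: Fc; rewrite /F e2 HH1.
  have : n%:R * c < n%:R :> R.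
    by rewrite -[X in _ < X]mulr1 ltr_pM2l // ltr0n n_gt0.
  lra.
have G0y : 0 <= G (ys c k) by rewrite -(GG0 R n); apply: G_le => //; apply: ys_ge0.
have arg1 : D (ys c k) - k.+1%:R * c < G 1.
  apply: (@Ginv_lt1 R n n2); apply: (top k.+1) => //.
have hG : G (ys c k.+1) = D (ys c k) - k.+1%:R * c.
  rewrite /= GGinv //; last exact: ltW.
  by move: dpos; rewrite /d /HH; lra.
split => //; rewrite ltNge; apply/negP => hle.
have := @G_le R n n2 _ _ (ys_ge0 c k.+1) hle.
by rewrite hG; move: dpos; rewrite /d /HH; lra.
Qed.

End Main.



Theorem mainTheorem8 (R : realType) (n : nat) (hn : (2 < n)%N) :
  exists! zeta : R,
    1 < zeta /\
    exists eps : nat -> R,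
      eps 1%N = 1 /\
      (forall j : nat, (1 <= j)%N -> (j <= n.-1)%N ->
         dPn n (1 - eps j.+1) - dPn n (1 - eps j)
         = eps j.+1 * dPn n (1 - eps j.+1) + Pn n (1 - eps j.+1) - j%:R / zeta) /\
      (forall j : nat, (1 <= j)%N -> (j < n)%N -> eps j.+1 < eps j) /\
      0 <= eps n /\
      zeta = n%:R / (eps n * dPn n (1 - eps n) + Pn n (1 - eps n)).
Proof.
have n2 : (2 <= n)%N by apply: ltnW.
have n0 : (0 < n)%N by apply: leq_trans n2.
have nR : (n%:R : R) != 0 by rewrite pnatr_eq0 -lt0n.
have e1 : forall y : R, 1 - (1 - y) = y by move=> y; ring.
have [c [c0 c1 Fc]] := root_exists R n n2.
have cu : c != 0 by rewrite gt_eqF.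
exists c^-1; split.
  split; first by rewrite invf_gt1.
  exists (fun j => 1 - ys R n n2 c j.-1); split; first by rewrite /= subr0.
  split.
    move=> [|k] // _ kn; rewrite !succnK !e1 invrK.
    have [hG _] := @root_props R n n2 c c0 c1 Fc k kn.
    move: hG; rewrite /GG mulrBl mul1r; lra.
  split.
    move=> [|k] // _ kn; rewrite !succnK ltrD2l ltrN2.
    have kn' : (k < n.-1)%N by rewrite -ltnS prednK.
    by have [_ h] := @root_props R n n2 c c0 c1 Fc k kn'.
  split; first by rewrite subr_ge0; apply: ys_le1.
  rewrite e1.
  have -> : (1 - ys R n n2 c n.-1) * dPn n (ys R n n2 c n.-1) + Pn n (ys R n n2 c n.-1)
     = n%:R * c by move: Fc; rewrite /F /HH /GG mulrBl mul1r; lra.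
  by field; apply/andP.
move=> z [z1 [eps [ep1 [eq [str [ep0 zf]]]]]].
set c' := z^-1.
have z0 : 0 < z by lra.
have c'0 : 0 < c' by rewrite invr_gt0.
have c'1 : c' < 1 by rewrite /c' invf_lt1.
have le1 : forall j, (1 <= j)%N -> (j <= n)%N -> eps j <= 1.
  elim=> [//|j IH] _ jn; case: j IH jn => [|j] IH jn; first by rewrite ep1.
  have := str j.+1 isT jn; have := IH isT (ltnW jn); lra.
have ge0 : forall i j, (j + i = n)%N -> (1 <= j)%N -> 0 <= eps j.
  elim=> [|i IH] j ji j1; first by move: ji; rewrite addn0 => ->.
  have := IH j.+1; rewrite addSnnS => /(_ ji isT) h.
  have := str j j1; rewrite -ji addnS ltnS leq_addr => /(_ isT); lra.
have ge0' : forall j, (1 <= j)%N -> (j <= n)%N -> 0 <= eps j.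
  by move=> j j1 jn; apply: (ge0 (n - j)%N) => //; rewrite subnKC.
have yseq : forall k, (k <= n.-1)%N -> ys R n n2 c' k = 1 - eps k.+1.
  elim=> [|k IH] kn; first by rewrite ep1 subrr.
  rewrite /= IH ?(ltnW kn) //.
  have hj := eq k.+1 isT kn.
  have -> : dPn n (1 - eps k.+1) - k.+1%:R * c' = GG R n (1 - eps k.+2).
    by rewrite /GG; move: hj; rewrite /c'; lra.
  have kn' : (k.+2 <= n)%N by rewrite -(prednK n0).
  apply: (@GinvK R n n2).
    by have := le1 k.+2 isT kn'; lra.
  by have := ge0' k.+2 isT kn'; lra.
have Fc' : F R n n2 c' = 0.
  rewrite /F yseq // prednK //.
  have [x ex] : exists x, eps n = 1 - x by exists (1 - eps n); ring.
  have x0 : 0 <= x by have := le1 n n0 (leqnn n); lra.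
  have x1 : x <= 1 by lra.
  rewrite ex !e1 in zf *.
  have hH := @H_ge1 R n n2 x x0 x1.
  have eH : (1 - x) * dPn n x + Pn n x = HH R n x.
    by rewrite /HH /GG; ring.
  rewrite eH in zf; rewrite /c' zf.
  have Hx : HH R n x != 0 by rewrite gt_eqF //; lra.
  by field; apply/andP.
have cc : c = c'.
  case: (ltgtP c c') => // h.
    by have := @F_strict R n n2 _ _ h; rewrite Fc Fc' ltxx.
  by have := @F_strict R n n2 _ _ h; rewrite Fc Fc' ltxx.
by rewrite cc /c' invrK.
Qed.
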